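(* Let $b,c\ge 0$ and consider the system $$\dot x=x(1-y+cx),\qquad \dot y=y(-1+x),\qquad \dot z=-bz.$$ Let $f\in\mathbb{C}[x,y,z]$ be an irreducible Darboux polynomial of degree greater than one with cofactor $k=\alpha_0+\alpha_1x+\alpha_2y+\alpha_3z$, $\alpha_i\in\mathbb{C}$. Then $\alpha_0=\alpha_1=\alpha_2=\alpha_3=0$.
   Context: A Darboux polynomial of the vector field $x(1-y+cx)\partial_x+y(-1+x)\partial_y-bz\partial_z$ is a polynomial $f$ with $x(1-y+cx)f_x+y(-1+x)f_y-bzf_z=kf$ for a polynomial cofactor $k$ (here of degree at most one). *)

(* Defs.v *)
From HB Require Import structures.
From mathcomp Require Import all_boot all_order all_algebra.
From mathcomp Require Import Rstruct.
From mathcomp Require Import complex.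
From mathcomp Require Import mpoly.
Set Implicit Arguments. Unset Strict Implicit. Unset Printing Implicit Defensive.
Import GRing.Theory Num.Theory.
Local Open Scope ring_scope.

Notation RR := Rdefinitions.R.
Definition CC : Type := complex RR.

Definition ix : 'I_3 := @Ordinal 3 0 isT.
Definition iy : 'I_3 := @Ordinal 3 1 isT.
Definition iz : 'I_3 := @Ordinal 3 2 isT.
Definition polX : {mpoly CC[3]} := 'X_ix.
Definition polY : {mpoly CC[3]} := 'X_iy.
Definition polZ : {mpoly CC[3]} := 'X_iz.

Definition rC (r : RR) : {mpoly CC[3]} := (real_complex RR r : CC)%:MP.

Definition Xfield (b c : RR) (f : {mpoly CC[3]}) : {mpoly CC[3]} :=
  polX * (1 - polY + rC c * polX) * f^`M(ix)
  + polY * (-1 + polX) * f^`M(iy)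
  - rC b * polZ * f^`M(iz).

Definition darboux (b c : RR) (f k : {mpoly CC[3]}) : Prop :=
  Xfield b c f = k * f.

Definition mirreducible (f : {mpoly CC[3]}) : Prop :=
  f != 0 /\ f \isn't a GRing.unit /\
  forall g h : {mpoly CC[3]}, f = g * h ->
    g \is a GRing.unit \/ h \is a GRing.unit.

Definition tdeg (f : {mpoly CC[3]}) : nat := (msize f).-1.

(* Main.v *)
Require Import Defs.
From HB Require Import structures.
From mathcomp Require Import all_boot all_order all_algebra.
From mathcomp Require Import Rstruct.
From mathcomp Require Import complex.
From mathcomp Require Import mpoly.
From mathcomp Require Import ring lra zify.
Import GRing.Theory Num.Theory.
Local Open Scope ring_scope.

Lemma mcoeffMXi (R : comNzRingType) n (p : {mpoly R[n]}) (k : 'I_n) m :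
  (p * 'X_k)@_m = if (0 < m k)%N then p@_(m - U_(k)) else 0.
Proof.
case: ifP => h.
  have e : m = (U_(k) + (m - U_(k)))%MM.
    apply/mnmP => i; rewrite mnmDE mnmBE mnm1E.
    case: eqP => [<-|_]; last by rewrite subn0.
    by rewrite /= subnKC.
  by rewrite {1}e mcoeffMX.
rewrite mcoeffM big1 // => kk /eqP e.
rewrite mcoeffX; case: eqP => [e2|]; last by rewrite mulr0.
exfalso; move: h; rewrite e mnmDE -e2 mnm1E eqxx.
by rewrite addn1.
Qed.

Lemma mcoeffDX (R : comNzRingType) n (p : {mpoly R[n]}) (k : 'I_n) m :
  (p^`M(k) * 'X_k)@_m = p@_m *+ m k.
Proof.
rewrite mcoeffMXi; case: ifP => h; last first.
  by move/negbT: h; rewrite -leqNgt leqn0 => /eqP ->.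
rewrite mcoeff_mderiv.
have e : (m - U_(k) + U_(k))%MM = m.
  apply/mnmP => i; rewrite mnmDE mnmBE mnm1E.
  case: eqP => [<-|_]; last by rewrite subn0 addn0.
  by rewrite /= subnK.
by rewrite e mnmBE mnm1E eqxx /= subn1 prednK.
Qed.

Lemma eq_sub0 (x y z : CC) : x = y -> z = x - y -> z = 0.
Proof. by move=> -> ->; rewrite subrr. Qed.

Lemma alg (F0 F1 F2 F3 a0 a1 a2 a3 bb cc : CC) (i j l : nat) :
 F0 *+ i + cc * (if (0 < i)%N then F1 *+ i.-1 else 0) - (if (0 < j)%N then F2 *+ i else 0)
 + (if (0 < i)%N then F1 *+ j else 0) - F0 *+ j - bb * (F0 *+ l) =
 a0 * F0 + a1 * (if (0 < i)%N then F1 else 0) + a2 * (if (0 < j)%N then F2 else 0)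
 + a3 * (if (0 < l)%N then F3 else 0) ->
 F0 * (i%:R - j%:R - bb * l%:R - a0) + (if (0 < i)%N then F1 * (cc * i.-1%:R + j%:R - a1) else 0)
 - (if (0 < j)%N then F2 * (i%:R + a2) else 0) - (if (0 < l)%N then a3 * F3 else 0) = 0.
Proof.
case: i => [|i]; case: j => [|j]; case: l => [|l] => /= h;
  apply: (eq_sub0 _ _ _ h); ring.
Qed.

Section Coef.
Variables (b c : RR) (f : {mpoly CC[3]}) (a0 a1 a2 a3 : CC).
Hypothesis H : darboux b c f (a0%:MP + a1%:MP * polX + a2%:MP * polY + a3%:MP * polZ).
Let bb : CC := real_complex RR b.
Let cc : CC := real_complex RR c.

Lemma coefE (m : 'X_{1..3}) :
 f@_m * ((m ix)%:R - (m iy)%:R - bb * (m iz)%:R - a0)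
 + (if (0 < m ix)%N then f@_(m - U_(ix)) * (cc * ((m ix).-1)%:R + (m iy)%:R - a1) else 0)
 - (if (0 < m iy)%N then f@_(m - U_(iy)) * ((m ix)%:R + a2) else 0)
 - (if (0 < m iz)%N then a3 * f@_(m - U_(iz)) else 0) = 0.
Proof.
move: H; rewrite /darboux /Xfield /rC -/bb -/cc /polX /polY /polZ.
set fx := f^`M(ix); set fy := f^`M(iy); set fz := f^`M(iz).
set X := 'X_ix; set Y := 'X_iy; set Z := 'X_iz.
move=> E.
have E2 : fx * X + cc%:MP * (fx * X * X) - fx * X * Y + fy * Y * X - fy * Y
   - bb%:MP * (fz * Z) = a0%:MP * f + a1%:MP * (f * X) + a2%:MP * (f * Y) + a3%:MP * (f * Z).
  apply: (etrans _ (etrans E _)); ring.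
move/(congr1 (mcoeff m)): E2.
rewrite !(mcoeffD, mcoeffB, mcoeffN, mcoeffCM) /X /Y /Z /fx /fy /fz.
rewrite (@mcoeffMXi _ _ (f^`M(ix) * 'X_ix) ix m) (@mcoeffMXi _ _ (f^`M(ix) * 'X_ix) iy m).
rewrite (@mcoeffMXi _ _ (f^`M(iy) * 'X_iy) ix m) !(@mcoeffMXi _ _ f).
rewrite !(@mcoeffDX _ _ f ix) !(@mcoeffDX _ _ f iy) !(@mcoeffDX _ _ f iz).
rewrite !mnmBE !mnm1E eqxx.
have -> : (iy == ix) = false by [].
have -> : (ix == iy) = false by [].
move: (f@_m) (f@_(m - U_(ix))%MM) (f@_(m - U_(iy))%MM) (f@_(m - U_(iz))%MM) => F0 F1 F2 F3.
move: (m ix) (m iy) (m iz) => i j l.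
rewrite !subn0 subn1.
exact: alg.
Qed.
End Coef.
Lemma maxP (P : pred nat) N : (exists n, P n) -> (forall n, P n -> (n < N)%N) ->
  exists2 n, P n & forall k, P k -> (k <= n)%N.
Proof.
move=> ex ub; have ub' : forall n, P n -> (n <= N)%N by move=> n /ub /ltnW.
by case: (ex_maxnP ex ub') => n Pn h; exists n.
Qed.

Lemma minP (P : pred nat) : (exists n, P n) -> exists2 n, P n & forall k, P k -> (n <= k)%N.
Proof. by move=> ex; case: (ex_minnP ex) => n Pn h; exists n. Qed.

Lemma natC_eq0 (n : nat) : (n%:R == 0 :> CC) = (n == 0%N).
Proof. by rewrite pnatr_eq0. Qed.

Lemma natC_inj (m n : nat) : (m%:R = n%:R :> CC) -> m = n.
Proof. by move/eqP; rewrite eqr_nat => /eqP. Qed.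

Section Comb.
Variables (C : nat -> nat -> nat -> CC) (N : nat) (bb cc a0 a1 a2 a3 : CC).
Hypothesis bound : forall i j l, C i j l != 0 -> (i + j + l < N)%N.
Hypothesis E : forall i j l,
  C i j l * (i%:R - j%:R - bb * l%:R - a0)
  + (if (0 < i)%N then C i.-1 j l * (cc * (i.-1)%:R + j%:R - a1) else 0)
  - (if (0 < j)%N then C i j.-1 l * (i%:R + a2) else 0)
  - (if (0 < l)%N then a3 * C i j l.-1 else 0) = 0.

Lemma a3_0 : (exists i j l, C i j l != 0) -> a3 = 0.
Proof.
case=> i0 [j0 [l0 H0]].
pose P l := [exists i : 'I_N, exists j : 'I_N, C i j l != 0].
have PP : forall i j l, C i j l != 0 -> P l.
  move=> i j l h; have := bound _ _ _ h => b.
  have hi : (i < N)%N by lia.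
  have hj : (j < N)%N by lia.
  by apply/existsP; exists (Ordinal hi); apply/existsP; exists (Ordinal hj).
have [L PL maxL] : exists2 n, P n & forall k, P k -> (k <= n)%N.
  apply: (maxP _ N); first by exists l0; exact: PP H0.
  by move=> l /existsP [i /existsP [j /bound]]; lia.
have Z : forall i j, C i j L.+1 = 0.
  move=> i j; apply/eqP; apply: contraT => h.
  by have := maxL _ (PP _ _ _ h); rewrite ltnn.
case/existsP: PL => i /existsP [j hij].
have := E i j L.+1; rewrite !Z !mul0r !if_same /= add0r !sub0r.
rewrite oppr0 sub0r => /eqP; rewrite oppr_eq0 mulf_eq0 (negbTE hij) orbF.
by move/eqP.
Qed.


Lemma a2_0 : a3 = 0 -> (exists j l, C 0 j l != 0) -> a2 = 0.
Proof.
move=> a30 [j0 [l0 H0]].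
have [J PJ maxJ] : exists2 n, (C 0 n l0 != 0) & forall k, C 0 k l0 != 0 -> (k <= n)%N.
  apply: (maxP _ N); first by exists j0.
  by move=> j /bound; lia.
have Z : C 0 J.+1 l0 = 0.
  by apply/eqP; apply: contraT => h; have := maxJ _ h; rewrite ltnn.
have := E 0 J.+1 l0; rewrite Z a30 !mul0r /= if_same subr0 !add0r.
by move=> /eqP; rewrite oppr_eq0 mulf_eq0 (negbTE PJ) /= => /eqP.
Qed.

Lemma perl l : a3 = 0 -> a2 = 0 -> (exists i j, C i j l != 0) ->
  exists n, [/\ C 0 n l != 0, (forall i j, C i j l != 0 -> i = 0%N /\ j = n),
     a1 = n%:R & a0 + bb * l%:R = - n%:R].
Proof.
move=> a30 a20 [i0 [j0 H0]].
pose Pd d := [exists i : 'I_N, exists j : 'I_N, (i + j == d)%N && (C i j l != 0)].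
have PP : forall i j, C i j l != 0 -> Pd (i + j)%N.
  move=> i j h; have := bound _ _ _ h => b.
  have hi : (i < N)%N by lia.
  have hj : (j < N)%N by lia.
  by apply/existsP; exists (Ordinal hi); apply/existsP; exists (Ordinal hj); rewrite eqxx h.
have [D PD maxD] : exists2 n, Pd n & forall k, Pd k -> (k <= n)%N.
  apply: (maxP _ N); first by exists (i0 + j0)%N; exact: PP.
  move=> d /existsP [i /existsP [j /andP [/eqP <- /bound]]]; lia.
have maxD' : forall i j, C i j l != 0 -> (i + j <= D)%N by move=> i j /PP /maxD.
have [i0' Q0 minQ] : exists2 n, (n <= D)%N && (C n (D - n) l != 0) &
    forall k, (k <= D)%N && (C k (D - k) l != 0) -> (n <= k)%N.
  apply: minP; case/existsP: PD => i /existsP [j /andP [/eqP hd hc]].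
  exists (nat_of_ord i); rewrite -hd leq_addr /=.
  by have -> : (i + j - i = j)%N by lia.
have CD : C 0 D l != 0.
  case/andP: Q0; case: i0' minQ => [|k] minQ hk hc; first by rewrite subn0 in hc.
  have Z1 : C k.+1 (D - k.+1).+1 l = 0.
    by apply/eqP; apply: contraT => h; have := maxD' _ _ h; lia.
  have Z2 : C k (D - k.+1).+1 l = 0.
    apply/eqP; apply: contraT => h.
    have e : ((D - k.+1).+1 = D - k)%N by lia.
    rewrite e in h.
    have : (k <= D)%N && (C k (D - k) l != 0) by rewrite h; lia.
    by move/minQ; rewrite ltnn.
  have := E k.+1 (D - k.+1).+1 l; rewrite Z1 Z2 a20 a30 !mul0r /=.
  rewrite if_same subr0 !add0r addr0 => /eqP.
  by rewrite oppr_eq0 mulf_eq0 (negbTE hc) natC_eq0.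
have a0D : a0 + bb * l%:R = - D%:R.
  have := E 0 D l; rewrite a20 a30 /= ?(add0r, addr0, mulr0, mul0r, subr0, if_same).
  move=> /eqP; rewrite mulf_eq0 (negbTE CD) /= => /eqP h.
  by apply/eqP; rewrite -subr_eq0 -oppr_eq0 -h; apply/eqP; ring.
pose R j := [exists i : 'I_N, C i j l != 0].
have PR : forall i j, C i j l != 0 -> R j.
  move=> i j h; have := bound _ _ _ h => b.
  have hi : (i < N)%N by lia.
  by apply/existsP; exists (Ordinal hi).
have [j1 Rj1 minj1] := minP R (ex_intro _ D (PR _ _ CD)).
have [i1 Ci1 mini1] : exists2 n, C n j1 l != 0 & forall k, C k j1 l != 0 -> (n <= k)%N.
  by apply: minP; case/existsP: Rj1 => i hi; exists (nat_of_ord i).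
have j1D : j1 = D /\ i1 = 0%N.
  have Z1 : (if (0 < i1)%N then C i1.-1 j1 l * (cc * (i1.-1)%:R + j1%:R - a1) else 0) = 0.
    case: i1 Ci1 mini1 => [|k] // _ mk /=.
    have -> : C k j1 l = 0 by apply/eqP; apply: contraT => /mk; rewrite ltnn.
    by rewrite mul0r.
  have Z2 : (if (0 < j1)%N then C i1 j1.-1 l * (i1%:R + a2) else 0) = 0.
    case: j1 Rj1 minj1 Ci1 mini1 Z1 => [|k] // _ mk _ _ _ /=.
    have -> : C i1 k l = 0 by apply/eqP; apply: contraT => /PR /mk; rewrite ltnn.
    by rewrite mul0r.
  have := E i1 j1 l; rewrite Z1 Z2 a30 mul0r if_same !subr0 addr0.

  move=> /eqP; rewrite mulf_eq0 (negbTE Ci1) /= => /eqP h.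
  have h2 : (i1 + D)%:R = j1%:R :> CC.
    rewrite natrD; apply/eqP; rewrite -subr_eq0 -h; apply/eqP.
    have -> : D%:R = - (a0 + bb * l%:R) by rewrite a0D opprK.
    ring.
  have := natC_inj _ _ h2; have := minj1 _ (PR _ _ CD); lia.
case: j1D => ej1 ei1.
have only : forall i j, C i j l != 0 -> i = 0%N /\ j = D.
  move=> i j h; have := maxD' _ _ h; have := minj1 _ (PR _ _ h); rewrite ej1; lia.
exists D; split => //.
have Z1 : C 1 D l = 0 by apply/eqP; apply: contraT => /only []. 
have Z2 : (if (0 < D)%N then C 1 D.-1 l * (1%:R + a2) else 0) = 0.
  case: (0 < D)%N => //.
  have -> : C 1 D.-1 l = 0 by apply/eqP; apply: contraT => /only [].
  by rewrite mul0r.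
have := E 1 D l; rewrite Z1 Z2 a30 !mul0r if_same /= add0r !subr0.
move=> /eqP; rewrite mulf_eq0 (negbTE CD) /= => /eqP h.
by apply/eqP; rewrite -subr_eq0 -oppr_eq0 -h; apply/eqP; ring.
Qed.

Lemma comb : (exists j l, C 0 j l != 0) -> (exists i l, C i 0 l != 0) ->
  (exists i j, C i j 0 != 0) -> [/\ a0 = 0, a1 = 0, a2 = 0 & a3 = 0].
Proof.
move=> NX [iy [ly Hy]] [iz [jz Hz]].
have a30 : a3 = 0 by apply: a3_0; exists iz, jz, 0%N.
have a20 : a2 = 0 by apply: a2_0.
have [n [_ only a1n _]] := perl ly a30 a20 (ex_intro _ iy (ex_intro _ 0%N Hy)).
have [_ n0] := only _ _ Hy.
have a10 : a1 = 0 by rewrite a1n -n0.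
have [n' [_ _ a1n' h]] := perl 0 a30 a20 (ex_intro _ iz (ex_intro _ jz Hz)).
split => //.
move: h; rewrite mulr0 addr0 => ->; by rewrite -a1n' a10 oppr0.
Qed.

End Comb.

Definition mon (i j l : nat) : 'X_{1..3} := [multinom (nth 0%N [:: i; j; l] k) | k < 3].

Lemma monx i j l : mon i j l ix = i. Proof. by rewrite mnmE. Qed.
Lemma mony i j l : mon i j l iy = j. Proof. by rewrite mnmE. Qed.
Lemma monz i j l : mon i j l iz = l. Proof. by rewrite mnmE. Qed.

Lemma monBx i j l : (mon i j l - U_(ix))%MM = mon i.-1 j l.
Proof. by apply/mnmP => k; rewrite mnmBE mnm1E !mnmE; case: k => [[|[|[|k]]] hk] //=; rewrite ?subn0 ?subn1. Qed.
Lemma monBy i j l : (mon i j l - U_(iy))%MM = mon i j.-1 l.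
Proof. by apply/mnmP => k; rewrite mnmBE mnm1E !mnmE; case: k => [[|[|[|k]]] hk] //=; rewrite ?subn0 ?subn1. Qed.
Lemma monBz i j l : (mon i j l - U_(iz))%MM = mon i j l.-1.
Proof. by apply/mnmP => k; rewrite mnmBE mnm1E !mnmE; case: k => [[|[|[|k]]] hk] //=; rewrite ?subn0 ?subn1. Qed.

Lemma monE (m : 'X_{1..3}) : m = mon (m ix) (m iy) (m iz).
Proof.
apply/mnmP => k; rewrite mnmE; case: k => [[|[|[|k]]] hk] //=;
  by congr (m _); apply: val_inj.
Qed.

Lemma mdeg_mon i j l : mdeg (mon i j l) = (i + j + l)%N.
Proof. by rewrite mdegE !big_ord_recr big_ord0 /= !mnmE /= add0n. Qed.

Lemma notdiv (f : {mpoly CC[3]}) (k : 'I_3) : mirreducible f -> (1 < tdeg f)%N ->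
  exists2 m, m \in msupp f & m k = 0%N.
Proof.
move=> [nz [nu irr]] hdeg.
have [/hasP [m hm /eqP mk]|/hasPn hn] := boolP (has (fun m : 'X_{1..3} => m k == 0%N) (msupp f)).
  by exists m.
pose g := \sum_(m <- msupp f) f@_m *: ('X_[m - U_(k)] : {mpoly CC[3]}).
have fE : f = 'X_k * g.
  rewrite {1}(mpolyE f) /g mulr_sumr; apply: eq_big_seq => m hm.
  rewrite -scalerAr -mpolyXD.
  have -> : (U_(k) + (m - U_(k)))%MM = m; last by [].
  apply/mnmP => i; rewrite mnmDE mnmBE mnm1E.
  case: eqP => [<-|_]; last by rewrite subn0.
  have := hn m hm; rewrite /= => h; rewrite subnKC //; lia.
have X0 : ('X_k : {mpoly CC[3]}) != 0.
  by rewrite -msize_poly_eq0 msizeX mdeg1.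
case: (irr _ _ fE) => u; have /andP [/eqP pE _] := mpoly_intro_unit (mulVr u).
  have U0 : ((U_(k))%MM == 0%MM) = false.
    apply/negbTE/eqP => /mnmP /(_ k); rewrite mnm1E mnm0E eqxx.
    by [].
  have := congr1 (mcoeff (U_(k))%MM) pE.
  rewrite mcoeffX mcoeffC U0 eqxx /= mulr0n mulr0 => /eqP.
  by rewrite oner_eq0.
move: hdeg; rewrite fE pE mulrC mul_mpolyC /tdeg.
have [->|c0] := eqVneq (g@_0) 0.
  by rewrite scale0r msize0.
by rewrite msizeZ // msizeX mdeg1.
Qed.

Section Final.
Variables (b c : RR) (f : {mpoly CC[3]}) (a0 a1 a2 a3 : CC).
Hypothesis H : darboux b c f (a0%:MP + a1%:MP * polX + a2%:MP * polY + a3%:MP * polZ).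

Lemma Eprime i j l :
  f@_(mon i j l) * (i%:R - j%:R - (real_complex RR b) * l%:R - a0)
  + (if (0 < i)%N then f@_(mon i.-1 j l) * ((real_complex RR c) * (i.-1)%:R + j%:R - a1) else 0)
  - (if (0 < j)%N then f@_(mon i j.-1 l) * (i%:R + a2) else 0)
  - (if (0 < l)%N then a3 * f@_(mon i j l.-1) else 0) = 0.
Proof.
have := @coefE _ _ _ _ _ _ _ H (mon i j l).
by rewrite monx mony monz monBx monBy monBz.
Qed.
End Final.


Theorem lemma4p1 (b c : RR) (hb : 0 <= b) (hc : 0 <= c)
    (f : {mpoly CC[3]}) (a0 a1 a2 a3 : CC) :
  mirreducible f -> (1 < tdeg f)%N ->
  darboux b c f (a0%:MP + a1%:MP * polX + a2%:MP * polY + a3%:MP * polZ) ->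
  [/\ a0 = 0, a1 = 0, a2 = 0 & a3 = 0].
Proof.
move=> irr hdeg H.
pose C i j l := f@_(mon i j l).
apply: (comb C (msize f) (real_complex RR b) (real_complex RR c) a0 a1 a2 a3).
- move=> i j l; rewrite /C -mcoeff_msupp => /msize_mdeg_lt.
  by rewrite mdeg_mon.
- move=> i j l; exact: (@Eprime _ _ _ _ _ _ _ H i j l).
- have [m hm mk] := notdiv f ix irr hdeg.
  exists (m iy), (m iz); move: hm; rewrite mcoeff_msupp {1}(monE m) mk.
  by [].
- have [m hm mk] := notdiv f iy irr hdeg.
  exists (m ix), (m iz); move: hm; rewrite mcoeff_msupp {1}(monE m) mk.
  by [].
- have [m hm mk] := notdiv f iz irr hdeg.
  exists (m ix), (m iy); move: hm; rewrite mcoeff_msupp {1}(monE m) mk.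
  by [].
Qed.
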